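(* For every vertex $v$ of $G^{(\rho)}_{n,\ell}$, there are at least $n^{\Omega(\log\ell)}$ directed paths starting or ending at $v$.
   Context: The instance $G^{(\rho)}_{n,\ell}$ (with $\rho>0$ a small constant): integers $m$ and $1/\epsilon$ with $\epsilon\rho m\in\mathbb N$, $\ell=3/\epsilon$, $\epsilon m=\omega(\log m)$; ground set $[m]$. Layers $L_0,\dots,L_\ell$: $L_0=\{s\}$ with label $\emptyset$; for $1\le i<2/\epsilon$, $L_i$ has one vertex for each subset of $[m]$ of size $i\epsilon\rho m$ (its label); for $2/\epsilon\le i\le 3/\epsilon$, one vertex for each subset of size $(4-i\epsilon)\rho m$. For $u\in L_{i-1},v\in L_i$ there is an edge $(u,v)$ iff $S_u\subseteq S_v$ (if $i\le 2/\epsilon$) or $S_v\subseteq S_u$ (if $i>2/\epsilon$), where $S_w$ is the label of $w$. $n$ is the number of vertices, $n=2^{\Theta(m)}$. *)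

(* Defs.v *)
From Stdlib Require Export Reals.
From HB Require Import structures.
From mathcomp Require Import all_boot.


(* Parametrisation: k = 1/epsilon (a positive integer), t = epsilon*rho*m
   (a natural number), ground set [m] = 'I_m, ell = 3/epsilon = 3*k.
   Layer i (0 <= i <= 3k) consists of the subsets of size lsize k t i:
     i < 2/eps          : i * eps*rho*m        = i * t
     2/eps <= i <= 3/eps: (4 - i*eps)*rho*m    = (4k - i) * t
   (layer 0 is the single vertex s with label set0). *)
Definition lsize (k t i : nat) : nat :=
  if (i < 2 * k)%N then (i * t)%N else ((4 * k - i) * t)%N.

Definition isvtx (m k t : nat) : pred ('I_(3 * k).+1 * {set 'I_m}) :=
  fun x => #|x.2| == lsize k t x.1.

Definition vtx (m k t : nat) := {x | isvtx m k t x}.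
HB.instance Definition _ (m k t : nat) := Finite.on (vtx m k t).

Definition layer m k t (v : vtx m k t) : nat := (val v).1.
Definition label m k t (v : vtx m k t) : {set 'I_m} := (val v).2.

Definition gedge (m k t : nat) : rel (vtx m k t) := fun u v =>
  (layer m k t v == (layer m k t u).+1) &&
  (if (layer m k t v <= 2 * k)%N then label m k t u \subset label m k t v
   else label m k t v \subset label m k t u).

Definition nverts (m k t : nat) : nat := #|{: vtx m k t}|.

(* Every directed path has fewer than n edges (the graph
   is a DAG), so summing over j < n counts all of them. *)
Definition npaths (m k t : nat) (v : vtx m k t) : nat :=
  \sum_(j < nverts m k t)
    #|[set xp : vtx m k t * j.-tuple (vtx m k t) |
        path (gedge m k t) xp.1 xp.2 &&
        ((xp.1 == v) || (last xp.1 xp.2 == v))]|.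

(* Main.v *)
Require Import Defs.
From Stdlib Require Import Reals Lra.
From mathcomp Require Import all_boot.
From mathcomp Require Import zify.
Set Implicit Arguments.
Unset Strict Implicit.

Lemma bin_pow_lb n t : t <= n -> n ^ t <= 'C(n, t) * t ^ t.
Proof.
elim: t n => [|t IH] n Htn; first by rewrite !expn0 bin0.
case: n Htn => [//|n] Htn.
have Htn' : t <= n by [].
have E : 'C(n.+1, t.+1) * t.+1 = n.+1 * 'C(n, t).
  by rewrite mulnC -mul_bin_diag.
have -> : 'C(n.+1, t.+1) * t.+1 ^ t.+1 = n.+1 * ('C(n, t) * t.+1 ^ t).
  by rewrite expnS mulnA E -mulnA.
rewrite expnS leq_mul2l /=.
case: t IH Htn Htn' E => [|t] IH Htn Htn' E; first by rewrite !expn0 bin0.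
have H1 := IH n Htn'.
have H2 : (n.+1 * t.+1) ^ t.+1 <= (n * t.+2) ^ t.+1.
  by rewrite leq_exp2r //; lia.
rewrite -(@leq_pmul2r (t.+1 ^ t.+1)) ?expn_gt0 //.
rewrite -expnMn (leq_trans H2) // expnMn -mulnA [t.+2 ^ _ * _]mulnC mulnA.
by rewrite leq_mul2r H1 orbT.
Qed.

Lemma bin_lb a n t : 0 < a -> a * t <= n -> a ^ t <= 'C(n, t).
Proof.
move=> Ha H.
case: t H => [|t] H; first by rewrite expn0 bin0.
have Htn : t.+1 <= n by apply: leq_trans H; rewrite leq_pmull.
rewrite -(@leq_pmul2r (t.+1 ^ t.+1)) ?expn_gt0 //.
rewrite -expnMn (leq_trans _ (@bin_pow_lb n t.+1 Htn)) // leq_exp2r //.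
Qed.

Lemma fwd_count (T : finType) (e : rel T) (D : nat) (P : nat -> pred T) :
  (forall j v, P j.+1 v -> D <= #|[set w | e v w && P j w]|) ->
  forall j v, P j v -> D ^ j <= #|[set p : j.-tuple T | path e v p]|.
Proof.
move=> HD; elim=> [|j IH] v Pv.
  rewrite expn0; apply/card_gt0P; exists [tuple]; by rewrite inE.
set N := [set w | e v w && P j w].
have S1 : D ^ j.+1 <= \sum_(w in N) #|[set p : j.-tuple T | path e w p]|.
  rewrite expnS (leq_trans (leq_mul (HD j v Pv) (leqnn (D ^ j)))) //.
  rewrite -sum_nat_const; apply: leq_sum => w; rewrite inE => /andP[_ Pw].
  exact: IH.
apply: (leq_trans S1).
have -> : \sum_(w in N) #|[set p : j.-tuple T | path e w p]| =
   #|[set wp : T * j.-tuple T | (wp.1 \in N) && path e wp.1 wp.2]|.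
  rewrite -sum1_card.
  rewrite (eq_bigr (fun w => \sum_(p : j.-tuple T | path e w p) 1)); last first.
    by move=> w _; rewrite -sum1_card; apply: eq_bigl => p; rewrite inE.
  rewrite pair_big_dep /=; apply: eq_bigl => wp; by rewrite !inE /=.
have inj : injective (fun wp : T * j.-tuple T => cons_tuple wp.1 wp.2).
  by move=> [x p] [y q] /(congr1 val) /= [-> /val_inj ->].
rewrite -(card_imset [set wp : T * j.-tuple T | (wp.1 \in N) && path e wp.1 wp.2] inj).
apply: subset_leq_card; apply/subsetP => _ /imsetP[[w p] + ->].
rewrite !inE /= => /andP[/andP[evw _] pw]; by rewrite evw.
Qed.

Definition PS (T : finType) (e : rel T) (v : T) (j : nat) :=
  [set xp : T * j.-tuple T | path e xp.1 xp.2 &&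
        ((xp.1 == v) || (last xp.1 xp.2 == v))].

Arguments PS {T}.

Lemma fwd_le (T : finType) (e : rel T) v j :
  #|[set p : j.-tuple T | path e v p]| <= #|PS e v j|.
Proof.
have inj : injective (fun p : j.-tuple T => (v, p)) by move=> p q [].
rewrite -(card_imset [set p : j.-tuple T | path e v p] inj).
apply: subset_leq_card; apply/subsetP => _ /imsetP[p + ->].
by rewrite !inE /= eqxx => ->.
Qed.

Lemma bwd_le (T : finType) (e : rel T) v j :
  #|[set p : j.-tuple T | path (fun x y => e y x) v p]| <= #|PS e v j|.
Proof.
pose f := fun q : j.-tuple T => (last v q, rev_tuple (belast_tuple v q)).
have inj : injective f.
  move=> p q H; case: H => E1 /(inv_inj (@revK _)) E2; apply: val_inj => /=.
  have : v :: p = v :: q by rewrite !lastI E1 E2.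
  by case.
rewrite -(card_imset [set p : j.-tuple T | path (fun x y => e y x) v p] inj).
apply: subset_leq_card; apply/subsetP => _ /imsetP[p + ->].
rewrite !inE /= rev_path => ->.
case: (tval p) => [|y s] /=; first by rewrite eqxx orbT.
by rewrite rev_cons last_rcons eqxx orbT.
Qed.

Lemma up_count m k t (v0 : vtx m k t) (S : {set 'I_m}) (j : 'I_(3 * k).+1) :
  #|S| + t = lsize k t j ->
  'C(m - #|S|, t) <=
    #|[set w : vtx m k t | (layer m k t w == j) && (S \subset label m k t w)]|.
Proof.
move=> Hs.
have -> : m - #|S| = #|~: S|.
  by rewrite cardsCs card_ord subKn // -[X in _ <= X](card_ord m) max_card.
rewrite -(cards_draws (~: S) t).
pose f X := insubd v0 ((j, S :|: X) : 'I_(3 * k).+1 * {set 'I_m}).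
have key : forall X : {set 'I_m}, X \subset ~: S -> #|X| = t ->
    val (f X) = (j, S :|: X) /\ X = (S :|: X) :\: S.
  move=> X XS Xt.
  have EX : X = (S :|: X) :\: S.
    by rewrite setDUl setDv set0U; apply/esym/setDidPl; rewrite disjoints_subset.
  have Hc : #|S :|: X| = #|S| + t.
    by rewrite -(cardsID S (S :|: X)) setUK -EX Xt.
  split=> //; rewrite /f insubdK //.
  by rewrite unfold_in /= Hc Hs.
have inj : {in [set X : {set 'I_m} | X \subset ~: S & #|X| == t] &, injective f}.
  move=> X Y; rewrite !inE => /andP[XS /eqP Xt] /andP[YS /eqP Yt] E.
  have [E1 E2] := key X XS Xt; have [E3 E4] := key Y YS Yt.
  by rewrite E2 E4; have := congr1 val E; rewrite E1 E3 => -[->].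
rewrite -(card_in_imset inj); apply: subset_leq_card; apply/subsetP => _ /imsetP[X + ->].
rewrite !inE => /andP[XS /eqP Xt]; have [E1 _] := key X XS Xt.
by rewrite /layer /label E1 /= eqxx subsetUl.
Qed.

Lemma down_count m k t (v0 : vtx m k t) (S : {set 'I_m}) (j : 'I_(3 * k).+1) :
  #|S| = lsize k t j + t ->
  'C(#|S|, t) <=
    #|[set w : vtx m k t | (layer m k t w == j) && (label m k t w \subset S)]|.
Proof.
move=> Hs.
rewrite -bin_sub; last by rewrite Hs leq_addl.
rewrite -(cards_draws S).
pose f X := insubd v0 ((j, X) : 'I_(3 * k).+1 * {set 'I_m}).
have key : forall X : {set 'I_m}, #|X| = #|S| - t -> val (f X) = (j, X).
  move=> X Xt; rewrite /f insubdK //.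
  by rewrite unfold_in /isvtx /= Xt Hs addnK.
have inj : {in [set X : {set 'I_m} | X \subset S & #|X| == #|S| - t] &, injective f}.
  move=> X Y; rewrite !inE => /andP[XS /eqP Xt] /andP[YS /eqP Yt] E.
  by have := congr1 val E; rewrite (key X Xt) (key Y Yt) => -[].
rewrite -(card_in_imset inj); apply: subset_leq_card; apply/subsetP => _ /imsetP[X + ->].
rewrite !inE => /andP[XS /eqP Xt].
by rewrite /layer /label (key X Xt) /= eqxx XS.
Qed.

Lemma vsize m k t (v : vtx m k t) : #|label m k t v| = lsize k t (layer m k t v).
Proof. exact: (eqP (valP v)). Qed.

Lemma out_deg m k t (v : vtx m k t) :
  1 <= k -> 4 * (k * t) <= m -> layer m k t v < 3 * k ->
  (k.+1) ^ t <= #|[set w | gedge m k t v w]|.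
Proof.
move=> hk hm hi.
have hs := vsize v.
move: hs hi; rewrite /gedge.
set i := layer m k t v; set S := label m k t v => hs hi.
have hj : i.+1 < (3 * k).+1 by [].
pose j : 'I_(3 * k).+1 := Ordinal hj.
case: (leqP i.+1 (2 * k)) => hi2.
- have E : #|S| + t = lsize k t j.
    rewrite hs /lsize /=; case: ifP; case: ifP; nia.
  apply: (leq_trans _ (leq_trans (up_count v E) _)).
    apply: bin_lb => //; rewrite hs /lsize; case: ifP; nia.
  apply: subset_leq_card; apply/subsetP => w; rewrite !inE => /andP[/eqP -> ->].
  by rewrite /= eqxx hi2.
- have E : #|S| = lsize k t j + t.
    rewrite hs /lsize /=; case: ifP; case: ifP => h1 h2; try nia.
  apply: (leq_trans _ (leq_trans (down_count v E) _)).
    apply: bin_lb => //; rewrite hs /lsize; case: ifP; nia.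
  apply: subset_leq_card; apply/subsetP => w; rewrite !inE => /andP[/eqP -> ->].
  by rewrite /= eqxx leqNgt hi2.
Qed.

Lemma in_deg m k t (v : vtx m k t) :
  1 <= k -> 4 * (k * t) <= m -> k < layer m k t v ->
  (k.+1) ^ t <= #|[set u | gedge m k t u v]|.
Proof.
move=> hk hm hi.
have hs := vsize v.
have hi3 : layer m k t v < (3 * k).+1 by rewrite /layer ltn_ord.
move: hs hi hi3; rewrite /gedge.
set i := layer m k t v; set S := label m k t v => hs hi hi3.
have hj : i.-1 < (3 * k).+1 by lia.
pose j : 'I_(3 * k).+1 := Ordinal hj.
case: (leqP i (2 * k)) => hi2.
- have E : #|S| = lsize k t j + t.
    rewrite hs /lsize /=; case: ifP; case: ifP; nia.
  apply: (leq_trans _ (leq_trans (down_count v E) _)).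
    apply: bin_lb => //; rewrite hs /lsize; case: ifP; nia.
  apply: subset_leq_card; apply/subsetP => w; rewrite !inE => /andP[/eqP -> ->].
  by rewrite andbT; apply/eqP => /=; lia.
- have E : #|S| + t = lsize k t j.
    rewrite hs /lsize /=; case: ifP; case: ifP; nia.
  apply: (leq_trans _ (leq_trans (up_count v E) _)).
    apply: bin_lb => //; rewrite hs /lsize; case: ifP; nia.
  apply: subset_leq_card; apply/subsetP => w; rewrite !inE => /andP[/eqP -> ->].
  by rewrite andbT; apply/eqP => /=; lia.
Qed.

Lemma main_nat m k t (v : vtx m k t) : 1 <= k -> 4 * (k * t) <= m ->
  (k.+1) ^ (t * k) <= #|PS (gedge m k t) v k|.
Proof.
move=> hk hm; rewrite expnM.
have hl : layer m k t v < (3 * k).+1 by rewrite /layer ltn_ord.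
case: (leqP (layer m k t v) (2 * k)) => hv.
- apply: (leq_trans _ (fwd_le (gedge m k t) v k)).
  apply: (@fwd_count _ _ _ (fun j w => layer m k t w + j <= 3 * k)) => [j w Pw|]; last by lia.
  apply: (leq_trans (@out_deg _ _ _ w hk hm _)); first by lia.
  apply: subset_leq_card; apply/subsetP => u; rewrite !inE => e.
  rewrite e /=; move: e; rewrite /gedge => /andP[/eqP -> _]; lia.
- apply: (leq_trans _ (bwd_le (gedge m k t) v k)).
  apply: (@fwd_count _ _ _ (fun j w => k + j < layer m k t w)) => [j w Pw|]; last by lia.
  apply: (leq_trans (@in_deg _ _ _ w hk hm _)); first by lia.
  apply: subset_leq_card; apply/subsetP => u; rewrite !inE => e.
  rewrite e /=; move: e; rewrite /gedge => /andP[/eqP E _]; lia.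
Qed.
Lemma card_seq_le m k t (s : seq (vtx m k t)) : #|s| <= nverts m k t.
Proof. rewrite /nverts. apply: max_card. Qed.

Lemma k_lt_n m k t (v : vtx m k t) : 0 < #|PS (gedge m k t) v k| -> k < nverts m k t.
Proof.
case/card_gt0P => -[x p]; rewrite inE /= => /andP[hp _].
have hs : path ltn (layer m k t x) (map (layer m k t) p).
  rewrite path_map; apply: sub_path hp => a b /andP[/eqP E _]; rewrite /relpre /= E; exact: ltnSn.
have hu : uniq (x :: p).
  apply: (@map_uniq _ _ (layer m k t)); apply: (sorted_uniq ltn_trans ltnn).
  exact: hs.
have Hc : #|x :: tval p| = k.+1 by rewrite (card_uniqP hu); exact: (congr1 S (size_tuple p)).
move: (card_seq_le (x :: tval p)); rewrite Hc; exact.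
Qed.

Lemma npaths_lb m k t (v : vtx m k t) : 1 <= k -> 4 * (k * t) <= m ->
  (k.+1) ^ (t * k) <= npaths m k t v /\ k < nverts m k t.
Proof.
move=> hk hm; have H := main_nat v hk hm.
have hk' : k < nverts m k t by apply: k_lt_n; apply: leq_trans H; rewrite expn_gt0.
split=> //; apply: (leq_trans H).
rewrite /npaths (bigD1 (Ordinal hk')) //=; exact: leq_addr.
Qed.

Lemma nverts_le m k t : nverts m k t <= (3 * k).+1 * 2 ^ m.
Proof.
rewrite /nverts.
have H := @leq_card (vtx m k t) ('I_(3 * k).+1 * {set 'I_m})%type val val_inj.
apply: (leq_trans H).
rewrite card_prod card_ord -cardsT -powersetT card_powerset cardsT card_ord.
exact: leqnn.
Qed.

Lemma pow4_ge m : (3 * m).+1 <= 4 ^ m.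
Proof. elim: m => [//|m IH]; rewrite expnS; lia. Qed.

Lemma nverts_le8 m k t : k <= m -> nverts m k t <= 8 ^ m.
Proof.
move=> hkm; apply: (leq_trans (nverts_le m k t)).
have -> : 8 ^ m = 4 ^ m * 2 ^ m by rewrite -expnMn.
rewrite leq_mul2r (leq_trans _ (pow4_ge m)) ?orbT //; lia.
Qed.

Open Scope R_scope.
Lemma INR_muln a b : INR (a * b)%N = INR a * INR b.
Proof. by rewrite -multE mult_INR. Qed.
Lemma INR_expn a b : INR (a ^ b)%N = INR a ^ b.
Proof. elim: b => [|b IH]; first by rewrite expn0. by rewrite expnS INR_muln IH. Qed.
Lemma le_INR' a b : (a <= b)%N -> INR a <= INR b.
Proof. by move/leP; apply: le_INR. Qed.
Lemma INR_le' a b : INR a <= INR b -> (a <= b)%N.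
Proof. by move=> H; apply/leP; apply: INR_le. Qed.
Lemma ln_le' x y : 0 < x -> x <= y -> ln x <= ln y.
Proof.
move=> hx hxy; case: (Rle_lt_or_eq_dec _ _ hxy) => h.
  by apply: Rlt_le; apply: ln_increasing.
by rewrite h; apply: Rle_refl.
Qed.
Lemma exp_le' x y : x <= y -> exp x <= exp y.
Proof.
move=> hxy; case: (Rle_lt_or_eq_dec _ _ hxy) => h.
  by apply: Rlt_le; apply: exp_increasing.
by rewrite h; apply: Rle_refl.
Qed.
Lemma ln2_lt1 : ln 2 < 1.
Proof.
have h := exp_ineq1 1 ltac:(lra).
rewrite -[X in _ < X](ln_exp 1); apply: ln_increasing; lra.
Qed.

Theorem lemma8 :
  exists rho0 : R, 0 < rho0 /\
  forall rho : R, 0 < rho -> rho <= rho0 ->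
  exists c : R, 0 < c /\
  exists K M : R,
  forall m k t : nat,
    (1 <= k)%nat ->
    INR t = rho * INR m / INR k ->
    M <= INR m ->
    K * ln (INR m) <= INR m / INR k ->
    forall v : vtx m k t,
      Rpower (INR (nverts m k t)) (c * ln (INR (3 * k)))
        <= INR (npaths m k t v).
Proof.
exists (1/4); split; first lra.
move=> rho hr0 hr1.
exists (rho/10); split; first lra.
exists 0, 1.
move=> m k t hk ht hM hK v.
have hkR : 1 <= INR k.
  have := le_INR' hk; by change (INR 1) with 1.
have hkt : INR (k * t) = rho * INR m.
  rewrite INR_muln ht; field; lra.
have htp : (0 < t)%N.
  have H : 0 < INR t by rewrite ht; apply: Rdiv_lt_0_compat; nra.
  rewrite lt0n; apply/eqP => h; rewrite h /= in H; lra.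
have hm4 : (4 * (k * t) <= m)%N.
  apply: INR_le'; rewrite INR_muln hkt [INR 4]/=; nra.
have [Hp Hkn] := npaths_lb v hk hm4.
have hkm : (k <= m)%N by nia.
have hn8 := nverts_le8 t hkm.
have hN1 : 1 <= INR (nverts m k t).
  have : (1 <= nverts m k t)%N by apply: leq_ltn_trans Hkn.
  by move/le_INR'; change (INR 1) with 1.
have hN8 : INR (nverts m k t) <= (2 ^ 3) ^ m.
  have := le_INR' hn8; rewrite INR_expn.
  have -> : INR 8 = 2 ^ 3 by rewrite [INR 8]/=; ring.
  done.
have hL : ln (INR (nverts m k t)) <= 3 * INR m.
  apply: (Rle_trans _ _ _ (ln_le' _ hN8)); first lra.
  rewrite ln_pow; last by lra.
  rewrite ln_pow; last by lra.
  have := ln2_lt1; have : 0 <= INR m by apply: pos_INR.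
  rewrite [INR 3]/=; nra.
have hL0 : 0 <= ln (INR (nverts m k t)).
  rewrite -ln_1; apply: ln_le'; lra.
have h3k : INR (3 * k) = 3 * INR k by rewrite INR_muln [INR 3]/=; ring.
have hd0 : 0 <= ln (INR k + 1) by rewrite -ln_1; apply: ln_le'; lra.
have hA0 : 0 <= ln (INR (3 * k)) by rewrite -ln_1; apply: ln_le'; lra.
have hA : ln (INR (3 * k)) <= 2 * ln (INR k + 1).
  have -> : 2 * ln (INR k + 1) = ln ((INR k + 1) ^ 2).
    by rewrite ln_pow; [rewrite [INR 2]/=; ring | lra].
  apply: ln_le'; rewrite h3k; nra.
have hR : Rpower (INR k + 1) (INR (t * k)) <= INR (npaths m k t v).
  rewrite Rpower_pow; last by lra.
  have := le_INR' Hp; rewrite INR_expn S_INR; done.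
apply: (Rle_trans _ _ _ _ hR).
rewrite /Rpower; apply: exp_le'.
rewrite [(t * k)%N]mulnC hkt.
have hX : ln (INR (3 * k)) * ln (INR (nverts m k t)) <= 2 * ln (INR k + 1) * (3 * INR m).
  by apply: Rmult_le_compat.
have : 0 <= INR m * ln (INR k + 1) by apply: Rmult_le_pos => //; apply: pos_INR.
nra.
Qed.
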